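(* For every instance of the Balancing with Conflicts game with $n$ players and $m$ machines: - the price of total anarchy is at most $2-\frac1m+\frac{m-1}{n}$ if $n\ge m$; - it is at most $1+\frac{2n-2}{m}$ if $n<m$; - it is at most $3-\frac2m$ for every $n$.
   Context: An instance of the Balancing with Conflicts (BwC) game consists of: - players $N=\{1,\dots,n\}$; - machines $M=\{1,\dots,m\}$; - a simple undirected graph $G=(N,E)$. Each player chooses one machine, so a state is $\vec s\in M^n$. Let $X_k(\vec s)=\{i:s_i=k\}$ and $x_k(\vec s)=|X_k(\vec s)|$. For $X\subseteq N$, $e(X)$ is the number of edges with both endpoints in $X$, and $e(\{i\},X)$ is the number of neighbours of $i$ in $X$. The cost of player $i$ with $s_i=k$ is $c_i(\vec s)=x_k(\vec s)+e(\{i\},X_k(\vec s))$. The social cost is $$c(\vec s)=\sum_ic_i(\vec s)=\sum_k\big(x_k(\vec s)^2+2e(X_k(\vec s))\big),$$ and $\vec s^*$ minimizes $c$. A coarse correlated equilibrium (CCE) is a probability distribution $\sigma$ over states such that for every player $i$ and every machine $s_i'$, $$\mathbf E_{\vec s\sim\sigma}[c_i(\vec s)]\le\mathbf E_{\vec s\sim\sigma}[c_i(s_i',\vec s_{-i})].$$ The price of total anarchy of an instance is the supremum over all CCE $\sigma$ of $\mathbf E_{\vec s\sim\sigma}[c(\vec s)]/c(\vec s^* )$. *)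

(* Defs.v *)
From HB Require Import structures.
From mathcomp Require Import all_boot all_order all_algebra.
Set Implicit Arguments. Unset Strict Implicit. Unset Printing Implicit Defensive.
Import Order.TTheory GRing.Theory Num.Theory.

Definition state (n m : nat) := {ffun 'I_n -> 'I_m}.

Definition simple_graph (n : nat) (G : rel 'I_n) : Prop :=
  symmetric G /\ irreflexive G.

Definition load (n m : nat) (s : state n m) (k : 'I_m) : nat :=
  #|[set j : 'I_n | s j == k]|.

Definition nbrs_on (n m : nat) (G : rel 'I_n) (s : state n m) (i : 'I_n) (k : 'I_m) : nat :=
  #|[set j : 'I_n | G i j && (s j == k)]|.

Definition player_cost (n m : nat) (G : rel 'I_n) (s : state n m) (i : 'I_n) : nat :=
  load s (s i) + nbrs_on G s i (s i).

Definition social_cost (n m : nat) (G : rel 'I_n) (s : state n m) : nat :=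
  \sum_(i < n) player_cost G s i.

Definition deviate (n m : nat) (s : state n m) (i : 'I_n) (k : 'I_m) : state n m :=
  [ffun j => if j == i then k else s j].

Local Open Scope ring_scope.

Definition is_distribution (R : realFieldType) (n m : nat)
    (sigma : {ffun state n m -> R}) : Prop :=
  (forall s, 0 <= sigma s) /\ \sum_(s : state n m) sigma s = 1.

Definition expect (R : realFieldType) (n m : nat)
    (sigma : {ffun state n m -> R}) (f : state n m -> nat) : R :=
  \sum_(s : state n m) sigma s * (f s)%:R.

Definition is_CCE (R : realFieldType) (n m : nat) (G : rel 'I_n)
    (sigma : {ffun state n m -> R}) : Prop :=
  is_distribution sigma /\
  forall (i : 'I_n) (k : 'I_m),
    expect sigma (fun s => player_cost G s i)
      <= expect sigma (fun s => player_cost G (deviate s i k) i).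

Definition is_optimum (n m : nat) (G : rel 'I_n) (sstar : state n m) : Prop :=
  forall s : state n m, (social_cost G sstar <= social_cost G s)%N.

(* "price of total anarchy <= b": the supremum over all CCE sigma of
   E_sigma[c] / c(sstar) is at most b, i.e. every such ratio is at most b. *)
Definition PoTA_le (R : realFieldType) (n m : nat) (G : rel 'I_n) (b : R) : Prop :=
  forall (sigma : {ffun state n m -> R}) (sstar : state n m),
    is_CCE G sigma -> is_optimum G sstar ->
    expect sigma (social_cost G) / (social_cost G sstar)%:R <= b.

(* Main.v *)
Require Import Defs.
From HB Require Import structures.
From mathcomp Require Import all_boot all_order all_algebra.
From mathcomp Require Import zify ring lra.
Import Order.TTheory GRing.Theory Num.Theory.
Set Implicit Arguments. Unset Strict Implicit.

Lemma card_ind (T : finType) (P : pred T) :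
  #|[set x | P x]| = (\sum_x (P x : nat))%N.
Proof.
rewrite -sum1dep_card big_mkcond /=; apply: eq_bigr => x _; by case: (P x).
Qed.

Lemma pick_sum (T : finType) (a : T) (f : T -> nat) :
  (\sum_k ((a == k) * f k))%N = f a.
Proof.
rewrite (bigD1 a) //= eqxx mul1n big1 ?addn0 // => k; rewrite eq_sym => /negbTE ->.
by rewrite mul0n.
Qed.

Lemma pick_sum1 (T : finType) (a : T) :
  (\sum_k ((a == k) : nat))%N = 1%N.
Proof.
rewrite -(@pick_sum T a (fun _ => 1%N)); apply: eq_bigr => k _; by rewrite muln1.
Qed.

Definition deg (n : nat) (G : rel 'I_n) (i : 'I_n) := #|[set j | G i j]|.

Lemma sum_dev (n m : nat) (G : rel 'I_n) (s : state n m) (i : 'I_n) :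
  (0 < m)%N -> irreflexive G ->
  (\sum_(k < m) player_cost G (deviate s i k) i = n + (m - 1) + deg G i)%N.
Proof.
move=> m0 irr.
rewrite /player_cost big_split /=.
have dii : forall k, deviate s i k i = k by move=> k; rewrite /deviate ffunE eqxx.
have dj : forall k j, deviate s i k j = if j == i then k else s j by move=> k j; rewrite /deviate ffunE.
under eq_bigr => k _ do rewrite dii.
under [X in (_ + X)%N]eq_bigr => k _ do rewrite dii.
congr (_ + _)%N.
- rewrite /load.
  under eq_bigr => k _ do rewrite card_ind.
  rewrite exchange_big /=.
  transitivity (\sum_(j < n) (1 + (j == i) * (m - 1)))%N.
    apply: eq_bigr => j _; under eq_bigr => k _ do rewrite dj.
    case: (eqVneq j i) => [eji|ji]; [subst j|]; rewrite /=.
      under eq_bigr => k _ do rewrite eqxx.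
      by rewrite sum_nat_const card_ord; lia.
    by rewrite pick_sum1 mul0n.
  rewrite big_split /= sum_nat_const card_ord muln1.
  by rewrite (eq_bigr (fun j => (i == j) * (m-1))%N) ?pick_sum // => j _; rewrite eq_sym.
- rewrite /nbrs_on /deg card_ind.
  under eq_bigr => k _ do rewrite card_ind.
  rewrite exchange_big /=; apply: eq_bigr => j _.
  under eq_bigr => k _ do rewrite dj.
  have [->|ji] := eqVneq j i.
    by rewrite irr /= big1.
  case: (G i j) => /=; first exact: pick_sum1.
  by rewrite big1.
Qed.

Lemma deg_le (n m : nat) (G : rel 'I_n) (t : state n m) (i : 'I_n) :
  (deg G i + load t (t i) <= nbrs_on G t i (t i) + n)%N.
Proof.
have hn : n = (\sum_(j < n) 1)%N by rewrite sum1_card card_ord.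
rewrite /deg /load /nbrs_on !card_ind [X in (_ <= _ + X)%N]hn -!big_split /=.
apply: leq_sum => j _; by case: (G i j); case: (t j == t i).
Qed.

Lemma load_ge1 (n m : nat) (t : state n m) (i : 'I_n) : (1 <= load t (t i))%N.
Proof.
rewrite /load card_ind (bigD1 i) //= eqxx; lia.
Qed.

Lemma sumQ (n m : nat) (t : state n m) :
  (\sum_(i < n) load t (t i) = \sum_(k < m) load t k * load t k)%N.
Proof.
transitivity (\sum_(i < n) \sum_(k < m) (t i == k) * load t k)%N.
  by apply: eq_bigr => i _; rewrite pick_sum.
rewrite exchange_big /=; apply: eq_bigr => k _.
rewrite {2}/load card_ind big_distrl /=; apply: eq_bigr => i _; by rewrite eq_sym.
Qed.

Lemma sumS (n m : nat) (t : state n m) :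
  (\sum_(k < m) load t k = n)%N.
Proof.
rewrite /load; under eq_bigr => k _ do rewrite card_ind.
have hn : n = (\sum_(j < n) 1)%N by rewrite sum1_card card_ord.
rewrite exchange_big /= [X in _ = X]hn; apply: eq_bigr => i _.
exact: pick_sum1.
Qed.
Local Open Scope ring_scope.

Lemma CS (R : realFieldType) (m : nat) (x : 'I_m -> R) :
  (\sum_k x k) ^+ 2 <= m%:R * \sum_k x k ^+ 2.
Proof.
have h : \sum_k \sum_l (2 * (x k * x l)) <= \sum_k \sum_(l < m) (x k ^+ 2 + x l ^+ 2).
  apply: ler_sum => k _; apply: ler_sum => l _.
  have := sqr_ge0 (x k - x l). move: (x k) (x l) => a b h; rewrite sqrrB in h; lra.
have e1 : \sum_k \sum_(l < m) (2 * (x k * x l)) = 2 * (\sum_k x k) ^+ 2.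
  rewrite expr2 big_distrl /= mulr_sumr; apply: eq_bigr => k _.
  by rewrite big_distrr /= mulr_sumr.
have e2 : \sum_k \sum_(l < m) (x k ^+ 2 + x l ^+ 2) = 2 * (m%:R * \sum_k x k ^+ 2).
  under eq_bigr => k _ do rewrite big_split /= sumr_const card_ord.
  rewrite big_split /= sumr_const card_ord sumrMnl.
  move: (\sum_(k < m) x k ^+ 2) => S; rewrite -[S *+ m]mulr_natr; move: (m%:R : R) => M; ring.
rewrite e1 e2 in h; move: h; move: ((\sum_k x k) ^+ 2) (m%:R * \sum_k x k ^+ 2) => a b; lra.
Qed.
Lemma expect_sum (R : realFieldType) (n m : nat) (sigma : {ffun state n m -> R})
  (I : finType) (f : I -> state n m -> nat) :
  expect sigma (fun s => \sum_(j : I) f j s)%N = \sum_(j : I) expect sigma (f j).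
Proof.
rewrite /expect; under eq_bigr => s _ do rewrite natr_sum mulr_sumr.
exact: exchange_big.
Qed.

Lemma expect_const (R : realFieldType) (n m : nat) (sigma : {ffun state n m -> R}) c :
  is_distribution sigma -> expect sigma (fun _ => c) = c%:R.
Proof. by case=> _ h1; rewrite /expect -mulr_suml h1 mul1r. Qed.

Lemma main_bound (R : realFieldType) (n m : nat) (G : rel 'I_n)
  (sigma : {ffun state n m -> R}) :
  (0 < m)%N -> simple_graph G -> is_CCE G sigma ->
  m%:R * expect sigma (social_cost G) <= (\sum_(i < n) (n + (m - 1) + deg G i))%N%:R.
Proof.
move=> m0 [_ irr] [hd hcce].
have eS : expect sigma (social_cost G) =
    \sum_(i < n) expect sigma (fun s => player_cost G s i).
  exact: (expect_sum sigma (fun i s => player_cost G s i)).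
rewrite eS mulr_sumr natr_sum; apply: ler_sum => i _.
rewrite (_ : _ * _ = \sum_(k < m) expect sigma (fun s => player_cost G s i)); last first.
  by rewrite sumr_const card_ord mulr_natl.
apply: le_trans (_ : \sum_(k < m) expect sigma (fun s => player_cost G (deviate s i k) i) <= _).
  by apply: ler_sum => k _; apply: hcce.
rewrite -(expect_sum sigma (fun k s => player_cost G (deviate s i k) i)).
rewrite -(expect_const (n + (m - 1) + deg G i) hd).
rewrite /expect le_eqVlt; apply/orP; left; apply/eqP/eq_bigr => s _; by rewrite sum_dev.
Qed.

Lemma key (R : realFieldType) (n m : nat) (G : rel 'I_n)
  (sigma : {ffun state n m -> R}) (t : state n m) :
  (0 < n)%N -> (0 < m)%N -> simple_graph G -> is_CCE G sigma ->
  exists Q N D : R, (social_cost G t)%:R = Q + N /\ 0 <= N /\ D + Q <= N + n%:R * n%:R /\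
     n%:R <= Q /\ n%:R * n%:R <= m%:R * Q /\
     m%:R * expect sigma (social_cost G) <= n%:R * (n%:R + (m%:R - 1)) + D.
Proof.
move=> n0 m0 sg hc.
have hm := main_bound m0 sg hc.
rewrite big_split /= sum_nat_const card_ord !natrD natrM natrD natrB // in hm.
set D := (\sum_(i < n) deg G i)%N in hm.
set Q := (\sum_(i < n) load t (t i))%N.
set N := (\sum_(i < n) nbrs_on G t i (t i))%N.
exists Q%:R, N%:R, D%:R; split; [|split; [by []|split; [|split; [|split; [|by []]]]]].
- by rewrite /social_cost /player_cost big_split natrD.
- rewrite -natrM -!natrD ler_nat.
  apply: leq_trans (_ : \sum_(i < n) (nbrs_on G t i (t i) + n) <= _)%N.
    rewrite /D /Q -big_split; apply: leq_sum => i _; exact: deg_le.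
  by rewrite big_split /= sum_nat_const card_ord.
- rewrite ler_nat.
  apply: leq_trans (_ : \sum_(i < n) 1 <= _)%N.
    by rewrite sum1_card card_ord.
  by apply: leq_sum => i _; apply: load_ge1.
- have := CS (fun k : 'I_m => (load t k)%:R : R).
  rewrite -natr_sum sumS /Q sumQ natr_sum => h; rewrite -expr2; apply: le_trans h _.
  rewrite le_eqVlt; apply/orP; left; apply/eqP; congr (_ * _); apply: eq_bigr => k _; by rewrite natrM expr2.
Qed.

Lemma frac_le (R : realFieldType) (X Y Z W : R) :
  0 < Y -> 0 < W -> X * W <= Z * Y -> X / Y <= Z / W.
Proof.
move=> hY hW h; rewrite ler_pdivrMr // mulrAC ler_pdivlMr //.
Qed.

Theorem corollary5 (R : realFieldType) (n m : nat) (G : rel 'I_n) :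
  (0 < n)%N -> (0 < m)%N -> simple_graph G ->
  ((m <= n)%N ->
     @PoTA_le R n m G (2 - 1 / m%:R + (m%:R - 1) / n%:R : R)) /\
  ((n < m)%N ->
     @PoTA_le R n m G (1 + (2 * n%:R - 2) / m%:R : R)) /\
  @PoTA_le R n m G (3 - 2 / m%:R : R).
Proof.
move=> n0 m0 sg.
have nR1 : 1 <= n%:R :> R by rewrite ler1n.
have mR1 : 1 <= m%:R :> R by rewrite ler1n.
have nz : n%:R != 0 :> R by rewrite pnatr_eq0 -lt0n.
have mz : m%:R != 0 :> R by rewrite pnatr_eq0 -lt0n.
have eB1 : (2 - 1 / m%:R + (m%:R - 1) / n%:R : R) =
   (2 * m%:R * n%:R - n%:R + m%:R * (m%:R - 1)) / (m%:R * n%:R).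
  by field; apply/andP.
have eB2 : (1 + (2 * n%:R - 2) / m%:R : R) = (m%:R + 2 * n%:R - 2) / m%:R.
  by field.
have eB3 : (3 - 2 / m%:R : R) = (3 * m%:R - 2) / m%:R by field.
have b1 : @PoTA_le R n m G (2 - 1 / m%:R + (m%:R - 1) / n%:R : R).
  move=> sigma t hc _; have [Q [N [D [hC [hN [hD [hQ1 [hQ2 hm]]]]]]]] := key t n0 m0 sg hc.
  rewrite hC eB1; apply: frac_le; [nra|nra|].
  move: (expect sigma (social_cost G)) hm => E hm.
  move: (n%:R : R) (m%:R : R) nR1 mR1 hD hQ1 hQ2 hm => x y hx hy hD hQ1 hQ2 hm.
  have p1 : 0 <= x * (x * (x + (y - 1)) + D - y * E) by apply: mulr_ge0; lra.
  have p2 : 0 <= x * (N + x * x - D - Q) by apply: mulr_ge0; lra.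
  have p3 : 0 <= (2 * x + y - 1) * (y * Q - x * x) by apply: mulr_ge0; lra.
  have p4 : 0 <= (2 * y * x - 2 * x + y * y - y) * N.
    apply: mulr_ge0 => //; nra.
  nra.
have b2 : @PoTA_le R n m G (1 + (2 * n%:R - 2) / m%:R : R).
  move=> sigma t hc _; have [Q [N [D [hC [hN [hD [hQ1 [hQ2 hm]]]]]]]] := key t n0 m0 sg hc.
  rewrite hC eB2; apply: frac_le; [nra|nra|].
  move: (expect sigma (social_cost G)) hm => E hm.
  move: (n%:R : R) (m%:R : R) nR1 mR1 hD hQ1 hQ2 hm => x y hx hy hD hQ1 hQ2 hm.
  have p3 : 0 <= (y + 2 * x - 1) * (Q - x) by apply: mulr_ge0; lra.
  have p4 : 0 <= (y + 2 * x - 3) * N by apply: mulr_ge0; lra.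
  nra.
split; [by move=> _|split; [by move=> _|]].
have [mn|nm] := leqP m n.
  move=> sigma t hc ho; apply: le_trans (b1 sigma t hc ho) _.
  rewrite eB1 eB3; apply: frac_le; [nra|nra|].
  have : (m%:R : R) <= n%:R by rewrite ler_nat.
  move: (n%:R : R) (m%:R : R) nR1 mR1 => x y hx hy hxy.
  have : 0 <= y * ((y - 1) * (x - y)) by apply: mulr_ge0; [lra|apply: mulr_ge0; lra].
  nra.
move=> sigma t hc ho; apply: le_trans (b2 sigma t hc ho) _.
rewrite eB2 eB3; apply: frac_le; [nra|nra|].
have : (n%:R + 1 : R) <= m%:R by rewrite natr1 ler_nat.
move: (n%:R : R) (m%:R : R) nR1 mR1 => x y hx hy hxy.
nra.
Qed.
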